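(* Let $\phi$ be an entanglement-breaking channel acting on $d\times d$ complex matrices, and suppose $\phi$ has a semipositive fixed point, i.e. a nonzero matrix $\rho\ge 0$ with $\det\rho=0$ and $\phi(\rho)=\rho$. Then $\dim\ker\phi\ge 2(d-1)$; in particular $\det\phi=0$.
   Context: A quantum channel is a completely positive, trace-preserving linear map on $\mathcal M(d;\mathbb C)$; it is entanglement-breaking if $(\phi\otimes I)(\rho_{AB})$ is separable for every bipartite state $\rho_{AB}$. The determinant $\det\phi$ is the determinant of $\phi$ regarded as a linear operator on the $d^2$-dimensional space $\mathcal M(d;\mathbb C)$ (the product of its eigenvalues with multiplicity). A matrix is called semipositive if it is positive semidefinite with at least one zero eigenvalue. *)

(* Defs.v *)
(* Complex matrices are modelled over an arbitrary
   numClosedFieldType C (algebraically closed field with conjugation and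
   order, e.g. the complex numbers or algC). *)
From HB Require Import structures.
From mathcomp Require Import all_boot all_order all_algebra.
Set Implicit Arguments. Unset Strict Implicit. Unset Printing Implicit Defensive.
Import Order.TTheory GRing.Theory Num.Theory.
Local Open Scope ring_scope.

Section QChannels.
Variable C : numClosedFieldType.

Definition adjmx m n (A : 'M[C]_(m, n)) : 'M[C]_(n, m) :=
  \matrix_(i, j) (A j i)^*.

Definition hermitian n (A : 'M[C]_n) : Prop := adjmx A = A.

Definition psd n (A : 'M[C]_n) : Prop :=
  hermitian A /\ forall v : 'cV[C]_n, 0 <= (adjmx v *m A *m v) 0 0.

Definition semipositive n (A : 'M[C]_n) : Prop :=
  psd A /\ \det A = 0.

Definition is_state n (A : 'M[C]_n) : Prop := psd A /\ \tr A = 1.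

(* bipartite index: 'I_(d * n) ~ 'I_d * 'I_n, inverse of mxvec_index *)
Definition split_idx (d n : nat) (k : 'I_(d * n)) : 'I_d * 'I_n :=
  enum_val (cast_ord (esym (mxvec_cast d n)) k).

(* Kronecker product A (x) B, indices ordered by mxvec_index *)
Definition tensmx d n (A : 'M[C]_d) (B : 'M[C]_n) : 'M[C]_(d * n) :=
  \matrix_(k, l) (A (split_idx k).1 (split_idx l).1 *
                  B (split_idx k).2 (split_idx l).2).

(* the (a,b) block of a bipartite matrix, as an operator on the first factor *)
Definition blockA d n (X : 'M[C]_(d * n)) (a b : 'I_n) : 'M[C]_d :=
  \matrix_(i, j) X (mxvec_index i a) (mxvec_index j b).

(* (phi (x) I_n) *)
Definition ampl d (n : nat) (phi : 'M[C]_d -> 'M[C]_d) (X : 'M[C]_(d * n)) :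
  'M[C]_(d * n) :=
  \matrix_(k, l) phi (blockA X (split_idx k).2 (split_idx l).2)
                     (split_idx k).1 (split_idx l).1.

Arguments ampl {d} n phi X.

Definition completely_positive d (phi : 'M[C]_d -> 'M[C]_d) : Prop :=
  forall (n : nat) (X : 'M[C]_(d * n)), psd X -> psd (ampl n phi X).

Definition trace_preserving d (phi : 'M[C]_d -> 'M[C]_d) : Prop :=
  forall X : 'M[C]_d, \tr (phi X) = \tr X.

Definition quantum_channel d (phi : {linear 'M[C]_d -> 'M[C]_d}) : Prop :=
  completely_positive phi /\ trace_preserving phi.

Definition separable d n (X : 'M[C]_(d * n)) : Prop :=
  exists s : seq (C * 'M[C]_d * 'M[C]_n),
    (forall t, t \in s -> 0 <= t.1.1 /\ is_state t.1.2 /\ is_state t.2) /\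
    X = \sum_(t <- s) t.1.1 *: tensmx t.1.2 t.2.

Definition entanglement_breaking d (phi : {linear 'M[C]_d -> 'M[C]_d}) : Prop :=
  quantum_channel phi /\
  forall (n : nat) (rho : 'M[C]_(d * n)), is_state rho -> separable (ampl n phi rho).

(* phi as a linear operator on the d^2-dimensional space M_d
   (acting on row vectors mxvec X) *)
Definition chmx d (phi : {linear 'M[C]_d -> 'M[C]_d}) : 'M[C]_(d * d) :=
  lin_mx phi.

Definition dim_ker d (phi : {linear 'M[C]_d -> 'M[C]_d}) : nat :=
  \rank (kermx (chmx phi)).

Definition det_ch d (phi : {linear 'M[C]_d -> 'M[C]_d}) : C :=
  \det (chmx phi).

End QChannels.

(* Main.v *)
Require Import Defs.
From HB Require Import structures.
From mathcomp Require Import all_boot all_order all_algebra.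
From mathcomp Require Import ring zify.
Import Order.TTheory GRing.Theory Num.Theory.
Local Open Scope ring_scope.

Set Implicit Arguments. Unset Strict Implicit. Unset Printing Implicit Defensive.

Section Aux.
Variable C : numClosedFieldType.

Lemma adjmxK m n (A : 'M[C]_(m, n)) : adjmx (adjmx A) = A.
Proof. by apply/matrixP => i j; rewrite !mxE conjCK. Qed.

Lemma adjmxM m n p (A : 'M[C]_(m, n)) (B : 'M[C]_(n, p)) :
  adjmx (A *m B) = adjmx B *m adjmx A.
Proof.
apply/matrixP => i j; rewrite !mxE rmorph_sum; apply: eq_bigr => k _.
by rewrite !mxE rmorphM mulrC.
Qed.

Lemma adjmxD m n (A B : 'M[C]_(m, n)) : adjmx (A + B) = adjmx A + adjmx B.
Proof. by apply/matrixP => i j; rewrite !mxE rmorphD. Qed.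

Lemma adjmxZ m n (a : C) (A : 'M[C]_(m, n)) : adjmx (a *: A) = a^* *: adjmx A.
Proof. by apply/matrixP => i j; rewrite !mxE rmorphM. Qed.

Lemma adjmx11 (A : 'M[C]_1) : adjmx A 0 0 = (A 0 0)^*.
Proof. by rewrite mxE. Qed.

Lemma normv_eq0 n (w : 'cV[C]_n) : (adjmx w *m w) 0 0 = 0 -> w = 0.
Proof.
rewrite mxE => H.
have S : \sum_(i < n) `|w i 0| ^+ 2 = 0.
  by rewrite -[RHS]H; apply: eq_bigr => i _; rewrite normCKC mxE.
have H' := psumr_eq0P (fun i _ => exprn_ge0 2 (normr_ge0 (w i 0))) S.
apply/matrixP => i j; rewrite ord1 mxE.
by have /eqP := H' i isT; rewrite sqrf_eq0 normr_eq0 => /eqP.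
Qed.

Definition qf n (A : 'M[C]_n) (v : 'cV[C]_n) := (adjmx v *m A *m v) 0 0.

Lemma psd_ker n (A : 'M[C]_n) (v : 'cV[C]_n) :
  psd A -> qf A v = 0 -> A *m v = 0.
Proof.
move=> [hA pA] qv.
have key : forall u : 'cV[C]_n, (adjmx u *m A *m v) 0 0 = 0.
  move=> u; set x := (adjmx u *m A *m v) 0 0; set a := qf A u.
  have a0 : 0 <= a by exact: pA.
  have y : (adjmx v *m A *m u) 0 0 = x^*.
    rewrite -adjmx11 /x !adjmxM adjmxK -mulmxA.
    by rewrite hA mulmxA.
  pose s := - x / (a + 1).
  have hs := pA (v + s *: u).
  have ex : (adjmx (v + s *: u) *m A *m (v + s *: u)) 0 0
      = qf A v + s * x^* + s^* * x + s^* * s * a.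
    rewrite adjmxD adjmxZ !mulmxDl !mulmxDr -!scalemxAl -!scalemxAr.
    rewrite -y /x /a /qf !mxE.
    rewrite mulrA; set S1 := \sum_j _; set S2 := \sum_j _; set S3 := \sum_j _.
    set S4 := \sum_j _.
    by rewrite -!addrA.
  rewrite ex qv add0r in hs.
  have a1 : a + 1 != 0 by rewrite gt_eqF // ltr_wpDl.
  have ca : (a + 1)^* = a + 1 by rewrite geC0_conj // addr_ge0.
  have sc : s^* = - x^* / (a + 1).
    rewrite /s rmorphM rmorphN fmorphV; congr (_ / _); exact: ca.
  rewrite sc /s in hs.
  have e2 : - x / (a + 1) * x^* + - x^* / (a + 1) * x
        + - x^* / (a + 1) * (- x / (a + 1)) * a
        = - (x * x^*) * ((a + 2%:R) / (a + 1) ^+ 2).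
    by field.
  rewrite e2 in hs.
  have pos : 0 < (a + 2%:R) / (a + 1) ^+ 2.
    by rewrite divr_gt0 // ?exprn_gt0 // ?ltr_wpDl // ltr0n.
  rewrite pmulr_lge0 // oppr_ge0 -normCK in hs.
  have : `|x| ^+ 2 == 0 by rewrite eq_le hs exprn_ge0.
  by rewrite sqrf_eq0 normr_eq0 => /eqP.
apply: normv_eq0; rewrite mulmxA.
exact: key.
Qed.

End Aux.

Lemma split_mxvec m n (i : 'I_m) (a : 'I_n) : split_idx (mxvec_index i a) = (i, a).
Proof. by rewrite /split_idx /mxvec_index cast_ordK enum_rankK. Qed.

Lemma mxvec_split m n (k : 'I_(m * n)) :
  mxvec_index (split_idx k).1 (split_idx k).2 = k.
Proof. by rewrite /split_idx /mxvec_index -surjective_pairing enum_valK cast_ordKV. Qed.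

Lemma sum_mxvec (R : nmodType) m n (F : 'I_(m * n) -> R) :
  \sum_(k < m * n) F k = \sum_(i < m) \sum_(j < n) F (mxvec_index i j).
Proof.
rewrite pair_big /= (reindex (fun p : 'I_m * 'I_n => mxvec_index p.1 p.2)) //.
exists (@split_idx m n) => [p _|k _]; last exact: mxvec_split.
by rewrite split_mxvec -surjective_pairing.
Qed.

Section Choi.
Variable C : numClosedFieldType.
Variable d : nat.
Hypothesis d0 : (0 < d)%N.

Definition ee (k : 'I_(d * d)) : C := ((split_idx k).1 == (split_idx k).2)%:R.
Definition omega : 'M[C]_(d * d) := \matrix_(k, l) (ee k * ee l / d%:R).

Lemma dn0 : (d%:R : C) != 0.
Proof. by rewrite pnatr_eq0 -lt0n. Qed.

Lemma omega_state : is_state omega.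
Proof.
split; [split|].
- apply/matrixP => k l; rewrite !mxE /ee !(rmorphM, fmorphV, rmorph_nat).
  by rewrite (mulrC (_ == _)%:R).
- move=> v.
  have -> : (adjmx v *m omega *m v) 0 0 =
     (\sum_k ee k * v k 0)^* * (\sum_k ee k * v k 0) / d%:R.
    rewrite mxE rmorph_sum mulrAC big_distrr /=.
    apply: eq_bigr => l _; rewrite mxE big_distrl /= big_distrl /= big_distrl /=.
    apply: eq_bigr => k _; rewrite !mxE rmorphM /ee rmorph_nat.
    ring.
  by rewrite -normCKC divr_ge0 // ?exprn_ge0 // ler0n.
- rewrite /mxtrace sum_mxvec.
  under eq_bigr => i _ do under eq_bigr => j _ do
    rewrite mxE /ee split_mxvec /=.
  transitivity (\sum_(i < d) (d%:R^-1 : C)); last first.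
    by rewrite sumr_const card_ord -(mulr_natl (d%:R^-1) d) mulfV ?dn0.
  apply: eq_bigr => i _; rewrite (bigD1 i) //= eqxx big1 ?addr0.
    by rewrite !mul1r.
  by move=> j /negbTE; rewrite eq_sym => ->; rewrite !mul0r.
Qed.


Definition pr (B X : 'M[C]_d) : C := (mxvec X *m (mxvec B)^T) 0 0.

Lemma prE B X : pr B X = \sum_a \sum_b X a b * B a b.
Proof.
rewrite /pr mxE sum_mxvec; apply: eq_bigr => a _; apply: eq_bigr => b _.
by rewrite !mxE !mxvecE.
Qed.

Lemma blockA_omega (a b : 'I_d) : blockA omega a b = d%:R^-1 *: delta_mx a b.
Proof.
apply/matrixP => i j; rewrite !mxE /ee !split_mxvec /=.
by case: (i == a); case: (j == b); rewrite /= ?mul1r ?mul0r ?mulr1 ?mulr0.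
Qed.

Lemma choi_rep (phi : {linear 'M[C]_d -> 'M[C]_d}) (s : seq (C * 'M[C]_d * 'M[C]_d)) :
  ampl phi omega = \sum_(t <- s) t.1.1 *: tensmx t.1.2 t.2 ->
  forall X, phi X = \sum_(t <- s) (d%:R * t.1.1 * pr t.2 X) *: t.1.2.
Proof.
move=> H.
have hd : forall a b i j, phi (delta_mx a b) i j =
    d%:R * \sum_(t <- s) t.1.1 * (t.1.2 i j * t.2 a b).
  move=> a b i j.
  have := congr1 (fun M : 'M[C]_(d * d) => M (mxvec_index i a) (mxvec_index j b)) H.
  rewrite /= /ampl mxE !split_mxvec /= blockA_omega linearZ mxE summxE.
  move=> h.
  have h2 : \sum_(t <- s) (t.1.1 *: tensmx t.1.2 t.2) (mxvec_index i a) (mxvec_index j b)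
     = \sum_(t <- s) t.1.1 * (t.1.2 i j * t.2 a b).
    by apply: eq_bigr => t _; rewrite !mxE !split_mxvec.
  by rewrite -h2 -h mulrA mulfV ?dn0 // mul1r.
move=> X; apply/matrixP => i j.
rewrite [in LHS](matrix_sum_delta X) linear_sum summxE.
under eq_bigr => a _ do rewrite linear_sum summxE.
under eq_bigr => a _ do under eq_bigr => b _ do rewrite linearZ mxE hd big_distrr /= big_distrr /=.
rewrite summxE.
under [RHS]eq_bigr => t _ do rewrite mxE prE big_distrr /= big_distrl /=.
rewrite [RHS]exchange_big /=; apply: eq_bigr => a _.
under [RHS]eq_bigr => t _ do rewrite big_distrr /= big_distrl /=.
rewrite [RHS]exchange_big /=; apply: eq_bigr => b _.
apply: eq_bigr => t _; ring.
Qed.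

End Choi.

Section Gen.
Variable C : numClosedFieldType.

Lemma tconj_adj m n (A : 'M[C]_(m, n)) : map_mx Num.Def.conjC (A ^T) = adjmx A.
Proof. by apply/matrixP => i j; rewrite !mxE. Qed.

Lemma expand_unitary n (U M : 'M[C]_n) : adjmx U *m U = 1%:M ->
  M = \sum_i \sum_j (row i U *m M *m adjmx (row j U)) 0 0 *:
        (adjmx (row i U) *m row j U).
Proof.
move=> hU.
have -> : \sum_i \sum_j (row i U *m M *m adjmx (row j U)) 0 0 *:
        (adjmx (row i U) *m row j U)
   = adjmx U *m (\sum_i \sum_j (U *m M *m adjmx U) i j *: delta_mx i j) *m U.
  rewrite mulmx_sumr mulmx_suml; apply: eq_bigr => i _.
  rewrite mulmx_sumr mulmx_suml; apply: eq_bigr => j _.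
  rewrite -scalemxAr -scalemxAl; congr (_ *: _).
    by rewrite -!row_mul !mxE; apply: eq_bigr => k _; rewrite !mxE.
  have ad : adjmx (delta_mx 0 i : 'rV[C]_n) = delta_mx i 0.
    by apply/matrixP => a b; rewrite !mxE conjC_nat andbC.
  rewrite [row i U]rowE adjmxM ad rowE !mulmxA; congr (_ *m _).
  by rewrite -mulmxA mul_delta_mx.
by rewrite -matrix_sum_delta !mulmxA hU mul1mx -mulmxA hU mulmx1.
Qed.

Lemma rank_sumsmx_le (I : finType) (P : pred I) m (F : I -> 'M[C]_m) :
  (\rank (\sum_(i | P i) F i)%MS <= \sum_(i | P i) \rank (F i))%N.
Proof.
elim/big_ind2: _ => [|A a B b hA hB|i _]; first by rewrite mxrank0.
  by apply: leq_trans (mxrank_adds_leqif A B).1 _; rewrite leq_add.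
exact: leqnn.
Qed.

Lemma lin_rep d (phi : {linear 'M[C]_d -> 'M[C]_d}) (I : Type) (s : seq I)
  (c : I -> C) (A B : I -> 'M[C]_d) :
  (forall X, phi X = \sum_(t <- s) (c t * pr (B t) X) *: A t) ->
  lin_mx phi = \sum_(t <- s) c t *: ((mxvec (B t))^T *m mxvec (A t)).
Proof.
move=> H; apply/row_matrixP => k; rewrite !rowE.
set u := delta_mx 0 k.
rewrite -{1}(vec_mxK u) mul_vec_lin H linear_sum mulmx_sumr /=.
apply: eq_bigr => t _; rewrite linearZ /= -scalemxAr mulmxA.
rewrite [u *m _]mx11_scalar mul_scalar_mx scalerA /pr vec_mxK.
by rewrite mulrC.
Qed.

Lemma qf_sum n (I : Type) (s : seq I) (k : I -> C) (A : I -> 'M[C]_n) v :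
  qf (\sum_(t <- s) k t *: A t) v = \sum_(t <- s) k t * qf (A t) v.
Proof.
rewrite /qf mulmx_sumr mulmx_suml summxE; apply: eq_bigr => t _.
by rewrite -scalemxAr -scalemxAl mxE.
Qed.

End Gen.

Section Main.
Variable C : numClosedFieldType.

Lemma adj_delta n (i : 'I_n) : adjmx (delta_mx 0 i : 'rV[C]_n) = delta_mx i 0.
Proof. by apply/matrixP => a b; rewrite !mxE conjC_nat andbC. Qed.

Lemma adj_tr m n (A : 'M[C]_(m, n)) : adjmx (A^T) = (adjmx A)^T.
Proof. by apply/matrixP => a b; rewrite !mxE. Qed.

Lemma main_rank d (rho : 'M[C]_d) (I : eqType) (s : seq I) (c : I -> C)
  (A B : I -> 'M[C]_d) :
  psd rho -> rho != 0 -> \det rho = 0 ->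
  (forall t, t \in s -> [/\ 0 <= c t, psd (A t) & psd (B t)]) ->
  rho = \sum_(t <- s) (c t * pr (B t) rho) *: A t ->
  exists r, [/\ (0 < r)%N, (r < d)%N &
   (\rank (\sum_(t <- s) c t *: ((mxvec (B t))^T *m mxvec (A t)))%R
       <= r * r + (d - r) * (d - r))%N].
Proof.
move=> hrho rho0 det0 hs hfix.
have hherm : adjmx rho = rho := hrho.1.
have normal : rho \is normalmx.
  by apply/normalmxP; rewrite tconj_adj hherm.
set P := spectralmx rho; set lam := spectral_diag rho.
have Pu : P \is unitarymx := spectral_unitarymx rho.
have hrhoP : rho = adjmx P *m diag_mx lam *m P.
  by rewrite {1}(elimT (orthomx_spectralP (A:=rho)) normal) invmx_unitary // tconj_adj.
have PP : P *m adjmx P = 1%:M by move/unitarymxP: Pu; rewrite tconj_adj.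
have PhP : adjmx P *m P = 1%:M.
  by rewrite -tconj_adj -invmx_unitary // mulVmx // unitarymx_unit.
pose w j := adjmx (row j P).
have wE j : w j = adjmx P *m delta_mx j 0 by rewrite /w rowE adjmxM adj_delta.
have rw j : rho *m w j = lam 0 j *: w j.
  rewrite hrhoP wE -!mulmxA (mulmxA P) PP mul1mx mul_diag_mx.
  rewrite scalemxAr; congr (_ *m _); apply/matrixP => a b; rewrite !mxE.
  by case: eqP => [->|]; rewrite ?mulr1 ?mulr0 //= andbF.
have rPw j : (row j P *m w j) 0 0 = 1.
  by rewrite wE rowE mulmxA -(mulmxA _ P) PP mulmx1 mul_delta_mx mxE !eqxx.
have lam_qf j : lam 0 j = qf rho (w j).
  by rewrite /qf -mulmxA rw -scalemxAr mxE /w adjmxK rPw mulr1.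
have lam_ge0 j : 0 <= lam 0 j by rewrite lam_qf; exact: hrho.2.
pose Q := adjmx (P^T).
have QhQ : adjmx Q *m Q = 1%:M.
  by rewrite /Q adjmxK adj_tr -trmx_mul PhP trmx1.
pose w' j := adjmx (row j Q).
have w'E j a : w' j a 0 = P j a by rewrite !mxE conjCK.
have rhoE a b : rho a b = \sum_k (P k a)^* * lam 0 k * P k b.
  rewrite hrhoP mul_mx_diag mxE; apply: eq_bigr => k _; rewrite !mxE.
  by [].
have prB Bm : pr Bm rho = \sum_j lam 0 j * qf Bm (w' j).
  rewrite prE.
  under eq_bigr => a _ do under eq_bigr => b _ do rewrite rhoE big_distrl /=.
  under [RHS]eq_bigr => j _ do rewrite /qf mxE big_distrr /=.
  under eq_bigr => a _ do rewrite exchange_big /=.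
  rewrite exchange_big /=; apply: eq_bigr => j _.
  rewrite exchange_big /=; apply: eq_bigr => b _.
  rewrite mxE big_distrl /= big_distrr /=; apply: eq_bigr => a _.
  by rewrite [adjmx (w' j) 0 a]mxE (w'E j a) (w'E j b); ring.
have prge0 Bm : psd Bm -> 0 <= pr Bm rho.
  move=> hB; rewrite prB; apply: sumr_ge0 => j _.
  by rewrite mulr_ge0 //; exact: hB.2.
have A0 t j : t \in s -> c t * pr (B t) rho != 0 -> lam 0 j = 0 -> A t *m w j = 0.
  move=> ts nz l0; have [_ hA _] := hs t ts.
  apply: psd_ker => //.
  have : qf rho (w j) = 0 by rewrite -lam_qf.
  rewrite {1}hfix qf_sum big_seq_cond => /eqP.
  rewrite psumr_eq0.
    move/allP/(_ t ts); rewrite ts /= => /eqP/eqP.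
    by rewrite mulf_eq0 (negbTE nz) /= => /eqP.
  move=> u /andP[us _]; have [cu hAu hBu] := hs u us.
  by rewrite !mulr_ge0 //; [exact: prge0 | exact: hAu.2].
have B0 t j : t \in s -> pr (B t) rho = 0 -> lam 0 j != 0 -> B t *m w' j = 0.
  move=> ts p0 lj; have [_ _ hB] := hs t ts.
  apply: psd_ker => //.
  move: p0; rewrite prB => /psumr_eq0P h.
  have /eqP := h (fun k _ => mulr_ge0 (lam_ge0 k) (hB.2 (w' k))) j isT.
  by rewrite mulf_eq0 (negbTE lj) /= => /eqP.
pose E1 := (\sum_(i | lam 0 i != 0) \sum_(j | lam 0 j != 0)
              <<mxvec (w i *m row j P)>>)%MS.
pose E0 := (\sum_(i | lam 0 i == 0) \sum_(j | lam 0 j == 0)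
              <<mxvec (w' i *m row j Q)>>)%MS.
have inE1 t : t \in s -> c t != 0 -> pr (B t) rho != 0 -> (mxvec (A t) <= E1)%MS.
  move=> ts cn pn; have [_ hA _] := hs t ts.
  have nz : c t * pr (B t) rho != 0 by rewrite mulf_neq0.
  rewrite (expand_unitary (A t) PhP) linear_sum; apply: summx_sub => i _.
  rewrite linear_sum; apply: summx_sub => j _; rewrite linearZ /=.
  case: (boolP (lam 0 i == 0)) => [/eqP li|li].
    have -> : row i P *m A t = adjmx (A t *m w i) by rewrite adjmxM hA.1 /w adjmxK.
    by rewrite A0 // (_ : adjmx 0 = 0) ?mul0mx ?mxE ?scale0r ?sub0mx //;
      apply/matrixP => a b; rewrite !mxE rmorph0.
  case: (boolP (lam 0 j == 0)) => [/eqP lj|lj].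
    by rewrite -mulmxA -/(w j) A0 // mulmx0 mxE scale0r sub0mx.
  apply: scalemx_sub; apply: (sumsmx_sup i) => //; apply: (sumsmx_sup j) => //.
  by rewrite genmxE.
have inE0 t : t \in s -> pr (B t) rho = 0 -> (mxvec (B t) <= E0)%MS.
  move=> ts pn; have [_ _ hB] := hs t ts.
  rewrite (expand_unitary (B t) QhQ) linear_sum; apply: summx_sub => i _.
  rewrite linear_sum; apply: summx_sub => j _; rewrite linearZ /=.
  case: (boolP (lam 0 i == 0)) => li; last first.
    have -> : row i Q *m B t = adjmx (B t *m w' i) by rewrite adjmxM hB.1 /w' adjmxK.
    by rewrite B0 // (_ : adjmx 0 = 0) ?mul0mx ?mxE ?scale0r ?sub0mx //;
      apply/matrixP => a b; rewrite !mxE rmorph0.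
  case: (boolP (lam 0 j == 0)) => lj; last first.
    by rewrite -mulmxA -/(w' j) B0 // mulmx0 mxE scale0r sub0mx.
  apply: scalemx_sub; apply: (sumsmx_sup i) => //; apply: (sumsmx_sup j) => //.
  by rewrite genmxE.
pose r := #|[pred i | lam 0 i != 0]|.
have cardZ : #|[pred i | lam 0 i == 0]| = (d - r)%N.
  have := cardC [pred i | lam 0 i != 0]; rewrite card_ord -/r => h.
  by rewrite -[in RHS]h addKn; apply: eq_card => i; rewrite !inE negbK.
have rkE1 : (\rank E1 <= r * r)%N.
  have h1 i : leq (\rank (\sum_(j | lam 0 j != 0) <<mxvec (w i *m row j P)>>)%MS) r.
    apply: leq_trans (rank_sumsmx_le _ _) _.
    rewrite /r -sum1_card; apply: leq_sum => j _.
    by rewrite genmxE rank_leq_row.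
  apply: leq_trans (rank_sumsmx_le _ _) _.
  apply: (@leq_trans (\sum_(i | lam 0 i != 0) r)).
    by apply: leq_sum => i _; exact: h1.
  by rewrite sum_nat_const.
have rkE0 : (\rank E0 <= (d - r) * (d - r))%N.
  have h1 i : leq (\rank (\sum_(j | lam 0 j == 0) <<mxvec (w' i *m row j Q)>>)%MS) (d - r).
    apply: leq_trans (rank_sumsmx_le _ _) _.
    rewrite -cardZ -sum1_card; apply: leq_sum => j _.
    by rewrite genmxE rank_leq_row.
  apply: leq_trans (rank_sumsmx_le _ _) _.
  apply: (@leq_trans (\sum_(i | lam 0 i == 0) (d - r)%N)).
    by apply: leq_sum => i _; exact: h1.
  by rewrite sum_nat_const cardZ.
have [j0 lj0] : exists j, lam 0 j == 0.
  have : \prod_i lam 0 i == 0.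
    have := det0; rewrite hrhoP !det_mulmx det_diag => /eqP.
    rewrite mulf_eq0 mulf_eq0 => /orP[/orP[h|->//]|h].
      have := congr1 determinant PhP; rewrite det_mulmx det1 (eqP h) mul0r.
      by move/eqP; rewrite eq_sym oner_eq0.
    have := congr1 determinant PhP; rewrite det_mulmx det1 (eqP h) mulr0.
    by move/eqP; rewrite eq_sym oner_eq0.
  by move/prodf_eq0 => [j _ h]; exists j.
have [j1 lj1] : exists j, lam 0 j != 0.
  have : ~~ [forall j, lam 0 j == 0].
    apply: contra rho0 => /forallP h; rewrite hrhoP.
    rewrite (_ : diag_mx lam = 0) ?mulmx0 ?mul0mx //.
    by apply/matrixP => a b; rewrite !mxE (eqP (h a)) mul0rn.
  by rewrite negb_forall => /existsP [j hj]; exists j.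
exists r; split.
- by apply/card_gt0P; exists j1; rewrite inE.
- by rewrite -subn_gt0 -cardZ; apply/card_gt0P; exists j0; rewrite inE.
rewrite (bigID (fun t => pr (B t) rho == 0)) /=.
apply: leq_trans (mxrank_add _ _) _; rewrite addnC leq_add //.
  apply: (leq_trans _ rkE1); apply: mxrankS.
  rewrite big_seq_cond; apply: summx_sub => t /andP[ts pn].
  case: (boolP (c t == 0)) => [/eqP ->|cn]; first by rewrite scale0r sub0mx.
  by apply: scalemx_sub; apply: mulmx_sub; exact: inE1.
rewrite -mxrank_tr; apply: (leq_trans _ rkE0); apply: mxrankS.
rewrite raddf_sum big_seq_cond; apply: summx_sub => t /andP[ts /eqP pn].
change ((c t *: ((mxvec (B t))^T *m mxvec (A t)))^T <= E0)%MS.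
rewrite linearZ /= trmx_mul trmxK.
by apply: scalemx_sub; apply: mulmx_sub; exact: inE0.
Qed.

End Main.

Unset Implicit Arguments.

Theorem mainTheorem5 (C : numClosedFieldType) (d : nat)
  (phi : {linear 'M[C]_d -> 'M[C]_d}) :
  entanglement_breaking phi ->
  (exists rho : 'M[C]_d, rho != 0 /\ semipositive rho /\ phi rho = rho) ->
  (2 * (d - 1) <= dim_ker phi)%N /\ det_ch phi = 0.
Proof.
move=> [_ eb] [rho [rho0 [[hrho det0] hfix]]].
have d0 : (0 < d)%N.
  rewrite lt0n; apply: contraNneq rho0 => d0; apply/eqP/matrixP => i j.
  by have := leq_trans (ltn_ord i) (eq_leq d0).
have [s [hsp hsep]] := eb d (@omega C d) (omega_state C d0).
have rep := choi_rep d0 hsep.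
have L := lin_rep (c := fun t => d%:R * t.1.1) (A := fun t => t.1.2)
   (B := fun t => t.2) rep.
have hs : forall t, t \in s ->
    [/\ 0 <= d%:R * t.1.1, psd t.1.2 & psd t.2].
  move=> t ts; have [h1 [[h2 _] [h3 _]]] := hsp t ts.
  by split => //; rewrite mulr_ge0 // ler0n.
have hf : rho = \sum_(t <- s) (d%:R * t.1.1 * pr t.2 rho) *: t.1.2.
  by rewrite -{1}hfix rep.
have [r [r0 rd hrk]] := main_rank hrho rho0 det0 hs hf.
rewrite -L in hrk.
have key : (r * r + (d - r) * (d - r) + 2 * (d - 1) <= d * d)%N.
  have [k ->] : exists k, d = (r + k.+1)%N by exists (d - r).-1; lia.
  move: r0; case: r {hrk rd hs hf} => // r' _; nia.
split.
  rewrite /dim_ker mxrank_ker /chmx; lia.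
apply/eqP; apply/negPn/negP => hn.
have : chmx phi \in unitmx by rewrite unitmxE unitfE.
move/mxrank_unit; rewrite /chmx => hr.
rewrite hr in hrk; lia.
Qed.
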